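(* Let $\mathcal{A}=\{\alpha_1<\dots<\alpha_m\}\subset(0,1)$, $|\mathcal{A}|=m$, $d_{\mathcal{A}}=\min_{\alpha\in\mathcal{A}}\min(\alpha,1-\alpha)$. Let $(b_t)$ be base forecasts with $b_t\in\mathcal{K}$ and $(y_t)$ real outcomes with $|y_t-b_t^{\alpha}|\le R$ for all $\alpha\in\mathcal{A}$, all $t$, for some $R>0$. Run MultiQT with constant delay $D\ge0$, learning rate $\eta>0$ and initial hidden offset $\tilde\theta_1\in\mathcal{K}$. Then for every $T\ge1$ and every $\alpha\in\mathcal{A}$, $$\Bigg|\frac{1}{T}\sum_{t=1}^T \mathrm{cov}_t^{\alpha}-\alpha\Bigg|\le \frac{2\|\tilde\theta_1\|_2}{\eta T}+\sqrt{\frac{|\mathcal{A}|(2D+1)}{T}+\frac{2R|\mathcal{A}|^{3/2}}{\eta\, d_{\mathcal{A}}\,T}}+\frac{D|\mathcal{A}|^{1/2}}{T}.$$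
   Context: $\mathcal{K}=\{x\in\mathbb{R}^m:x_1\le\dots\le x_m\}$; $\Pi_C$ denotes Euclidean projection onto a closed convex set $C$, and $C-v=\{x-v:x\in C\}$. MultiQT with constant delay $D\ge0$: for $t=1,2,\dots$, set $\theta_t=\Pi_{\mathcal{K}-b_t}(\tilde\theta_t)$, output $q_t=b_t+\theta_t$ (equivalently $q_t=\Pi_{\mathcal{K}}(b_t+\tilde\theta_t)$), define $\mathrm{cov}_t^{\alpha}=\mathbb{1}\{y_t\le q_t^{\alpha}\}$, and update the hidden offset by $\tilde\theta_{t+1}^{\alpha}=\tilde\theta_t^{\alpha}-\eta(\mathrm{cov}_{t-D}^{\alpha}-\alpha)$ for $t>D$ and $\tilde\theta_{t+1}=\tilde\theta_t$ for $t\le D$ (the outcome $y_s$ becomes available only after the forecast at time $s+D$ is made). *)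

(* Defs.v *)
From HB Require Import structures.
From mathcomp Require Import all_boot all_order all_algebra.
From mathcomp Require Import reals.
Set Implicit Arguments. Unset Strict Implicit. Unset Printing Implicit Defensive.
Import Order.TTheory GRing.Theory Num.Theory.
Local Open Scope ring_scope.

Section MultiQT.
Variables (R : realType) (m : nat).

Definition isoK (x : 'I_m -> R) : Prop := forall i j : 'I_m, (i <= j)%N -> x i <= x j.

(* K - v = {x - v : x in K} = {x : x + v in K} *)
Definition shiftK (v : 'I_m -> R) (x : 'I_m -> R) : Prop := isoK (fun i => x i + v i).

Definition sqnorm (x : 'I_m -> R) : R := \sum_(i < m) x i ^+ 2.
Definition norm2 (x : 'I_m -> R) : R := Num.sqrt (sqnorm x).

Definition is_proj (C : ('I_m -> R) -> Prop) (x p : 'I_m -> R) : Prop :=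
  C p /\ forall z, C z -> sqnorm (fun i => x i - p i) <= sqnorm (fun i => x i - z i).

(* d_A = min_alpha min(alpha, 1 - alpha)  (m >= 1 and alpha < 1 make this the true min) *)
Definition dA (alpha : 'I_m -> R) : R :=
  \big[Num.min/1]_(i < m) Num.min (alpha i) (1 - alpha i).

Definition covind (y q : R) : R := ((y <= q)%R)%:R.

End MultiQT.

(* Main.v *)
Require Import Defs.
From HB Require Import structures.
From mathcomp Require Import all_boot all_order all_algebra.
From mathcomp Require Import reals.
From mathcomp Require Import ring lra.
Import Order.TTheory GRing.Theory Num.Theory.
Local Open Scope ring_scope.

Definition dotp {R : realType} {m : nat} (x z : 'I_m -> R) : R := \sum_(j < m) x j * z j.

Lemma vi_dir (R : realType) (m : nat) (C : ('I_m -> R) -> Prop) (x p w : 'I_m -> R) :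
  is_proj C x p -> (forall e : R, 0 < e <= 1 -> C (fun j => p j + e * w j)) ->
  dotp (fun j => x j - p j) w <= 0.
Proof.
move=> [_ Hmin] HC.
set a := dotp _ w. set W := sqnorm w.
have W0 : 0 <= W by apply: sumr_ge0 => j _; exact: sqr_ge0.
have key : forall e : R, 0 < e <= 1 -> 2 * e * a <= e^+2 * W.
  move=> e he; have := Hmin _ (HC e he).
  have -> : sqnorm (fun j => x j - (p j + e * w j)) =
     sqnorm (fun j => x j - p j) - 2 * e * a + e^+2 * W.
    rewrite /sqnorm /a /dotp /W !mulr_sumr -sumrB -big_split /=.
    by apply: eq_bigr => j _; ring.
  lra.
rewrite leNgt; apply/negP => a0.
have aW : 0 < a + W by lra.
set e := a / (a + W).
have e0 : 0 < e by rewrite divr_gt0.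
have eaW : e * (a + W) = a by rewrite /e mulfVK // gt_eqF.
have e1 : e <= 1 by rewrite ler_pdivrMr // mul1r; lra.
have := key e; rewrite e0 e1 => /(_ isT) H.
nra.
Qed.
Section Dyn.
Variables (R : realType) (m : nat) (alpha : 'I_m -> R)
  (b : nat -> 'I_m -> R) (y : nat -> R) (Rb : R) (D : nat) (eta : R)
  (thtil theta : nat -> 'I_m -> R).
Hypothesis Hinc : forall i j : 'I_m, (i < j)%N -> alpha i < alpha j.
Hypothesis Hal : forall i, 0 < alpha i < 1.
Hypothesis HR : 0 < Rb.
Hypothesis Heta : 0 < eta.
Hypothesis Hy : forall t i, (1 <= t)%N -> `|y t - b t i| <= Rb.
Hypothesis Hproj : forall t, (1 <= t)%N -> is_proj (shiftK (b t)) (thtil t) (theta t).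
Hypothesis Hupd : forall t i, (1 <= t)%N -> (D < t)%N ->
     thtil t.+1 i = thtil t i
       - eta * (covind (y (t - D)%N) (b (t - D)%N i + theta (t - D)%N i) - alpha i).
Hypothesis Hfrz : forall t, (1 <= t)%N -> (t <= D)%N -> thtil t.+1 = thtil t.

Let g s j := covind (y s) (b s j + theta s j) - alpha j.

Lemma g_bound s j : `|g s j| <= 1.
Proof.
have /andP [h1 h2] := Hal j; rewrite /g /covind.
by case: (y s <= _); rewrite /= ler_norml; apply/andP; split; lra.
Qed.

Lemma dot_bound (h k : 'I_m -> R) : (forall j, `|h j| <= 1) -> (forall j, `|k j| <= 1) ->
  `|dotp h k| <= m%:R.
Proof.
move=> Hh Hk; rewrite /dotp; apply: (le_trans (ler_norm_sum _ _ _)).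
have -> : (m%:R : R) = \sum_(j < m) 1 by rewrite sumr_const card_ord.
apply: ler_sum => j _; rewrite normrM -[1]mulr1.
by apply: ler_pM => //; apply: normr_ge0.
Qed.

Lemma step_dot u (h : 'I_m -> R) : (1 <= u)%N -> (forall j, `|h j| <= 1) ->
  `|dotp (thtil u.+1) h - dotp (thtil u) h| <= eta * m%:R.
Proof.
move=> u1 Hh; case: (ltnP D u) => Du.
  have -> : dotp (thtil u.+1) h - dotp (thtil u) h = - eta * dotp (g (u - D)) h.
    rewrite /dotp -sumrB mulr_sumr; apply: eq_bigr => j _.
    rewrite Hupd // /g; ring.
  rewrite normrM normrN (gtr0_norm Heta) ler_pM2l //.
  by apply: dot_bound => // j; apply: g_bound.
rewrite Hfrz // subrr normr0; exact: mulr_ge0 (ltW Heta) (ler0n _ _).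
Qed.

Lemma multi_dot s k (h : 'I_m -> R) : (1 <= s)%N -> (forall j, `|h j| <= 1) ->
  `|dotp (thtil (s + k)) h - dotp (thtil s) h| <= k%:R * (eta * m%:R).
Proof.
move=> s1 Hh; elim: k => [|k IH]; first by rewrite addn0 subrr normr0 mul0r.
have sk : (1 <= s + k)%N by rewrite (leq_trans s1) // leq_addr.
have := step_dot (s + k) h sk Hh; rewrite addnS.
move: IH; rewrite !ler_norml -natr1 => /andP [a1 a2] /andP [a3 a4].
apply/andP; split; lra.
Qed.

Lemma B_bound s : (1 <= s)%N -> - (m%:R * Rb) <= dotp (thtil s) (g s).
Proof.
move=> s1; have [Cp Hmin] := Hproj _ s1.
set q := fun j => b s j + theta s j.
set v := fun j => thtil s j - theta s j.
have split_ : dotp (thtil s) (g s) =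
   dotp (theta s) (g s) + (dotp v (fun j => covind (y s) (q j)) - dotp v alpha).
  rewrite /dotp -sumrB -big_split /=; apply: eq_bigr => j _; rewrite /v /g /q; ring.
have T1 : - (m%:R * Rb) <= dotp (theta s) (g s).
  have -> : - (m%:R * Rb) = \sum_(j < m) (- Rb) by rewrite sumr_const card_ord -mulr_natl; ring.
  apply: ler_sum => j _.
  have /andP [a1 a2] := Hal j.
  have := Hy s j s1; rewrite ler_norml => /andP [y1 y2].
  have gb := g_bound s j; move: gb; rewrite ler_norml => /andP [g1 g2].
  have [th1|th1] := lerP (theta s j) Rb.
    have [th2|th2] := lerP (- Rb) (theta s j).
      nra.
    rewrite /g /covind; have -> : (y s <= b s j + theta s j) = false.
      by apply/negbTE; rewrite -ltNge; lra.
    rewrite /=; nra.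
  rewrite /g /covind; have -> : (y s <= b s j + theta s j) = true.
    by apply/idP; lra.
  rewrite /=; nra.
have T2 : dotp v alpha <= 0.
  apply: (vi_dir _ _ _ _ _ alpha (Hproj _ s1)).
  move=> e /andP [e0 e1] i j ij.
  have := Cp i j ij.
  have : alpha i <= alpha j.
    move: ij; rewrite leq_eqVlt => /orP [/eqP ij|ij].
      by have -> : i = j by apply: val_inj.
    exact/ltW/Hinc.
  nra.
have T3 : 0 <= dotp v (fun j => covind (y s) (q j)).
  pose del := \big[Num.min/1]_(j < m) (if q j < y s then y s - q j else 1).
  have del0 : 0 < del.
    apply: lt_bigmin => // j _; case: ifP => // /[!subr_gt0] //.
  have delle : forall j, q j < y s -> del <= y s - q j.
    by move=> j hj; have := bigmin_le 1 j (fun j => if q j < y s then y s - q j else 1); rewrite hj.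
  have := vi_dir _ _ _ _ _ (fun j => - del * covind (y s) (q j)) (Hproj _ s1).
  have -> : dotp (fun j => thtil s j - theta s j) (fun j => - del * covind (y s) (q j))
      = - del * dotp v (fun j => covind (y s) (q j)).
    by rewrite /dotp mulr_sumr; apply: eq_bigr => j _; rewrite /v; ring.
  move=> H.
  have {}H : - del * dotp v (fun j => covind (y s) (q j)) <= 0.
    apply: H => e /andP [e0 e1] i j ij.
    have := Cp i j ij; rewrite -/(q i) -/(q j) => qij.
    rewrite /= /covind.
    have dl := delle i.
    case: (lerP (y s) (q i)) => yi; case: (lerP (y s) (q j)) => yj /=;
    rewrite /q in qij yi yj dl *;
    first [lra | (have H2 := dl yi; nra)].
  nra.
rewrite split_; lra.
Qed.

Let X := eta ^+ 2 * m%:R * (2 * D%:R + 1) + 2 * eta * m%:R * Rb.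

Lemma N_step t : (D < t)%N -> sqnorm (thtil t.+1) <= sqnorm (thtil t) + X.
Proof.
move=> Dt; have t1 : (1 <= t)%N by apply: leq_ltn_trans Dt.
set s := (t - D)%N.
have s1 : (1 <= s)%N by rewrite subn_gt0.
have E : sqnorm (thtil t.+1) = sqnorm (thtil t) - 2 * eta * dotp (thtil t) (g s)
     + eta ^+ 2 * sqnorm (g s).
  rewrite /sqnorm /dotp !mulr_sumr -sumrB -big_split /=; apply: eq_bigr => j _.
  rewrite Hupd // /g /s; ring.
have G : sqnorm (g s) <= m%:R.
  have -> : (m%:R : R) = \sum_(j < m) 1 by rewrite sumr_const card_ord.
  apply: ler_sum => j _; have := g_bound s j; rewrite ler_norml => /andP [a1 a2]; nra.
have M := multi_dot s D (g s) s1 (g_bound s).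
have sD : (s + D = t)%N by rewrite /s subnK // ltnW.
rewrite sD in M.
have Bb := B_bound s s1.
move: M; rewrite ler_norml => /andP [m1 m2].
have h1 : - (m%:R * Rb) - D%:R * (eta * m%:R) <= dotp (thtil t) (g s) by lra.
have h2 := ler_wpM2l (ltW Heta) h1.
have h3 := ler_wpM2l (sqr_ge0 eta) G.
rewrite E /X; lra.
Qed.

Lemma frz k : (k <= D)%N -> thtil k.+1 = thtil 1.
Proof.
elim: k => [//|k IH] kD.
by rewrite Hfrz // IH // ltnW.
Qed.

Lemma N_bound k : sqnorm (thtil (D.+1 + k)) <= sqnorm (thtil 1) + k%:R * X.
Proof.
elim: k => [|k IH]; first by rewrite addn0 frz // mul0r addr0.
rewrite addnS; apply: (le_trans (N_step (D.+1 + k) _)); first by rewrite addSn ltnS leq_addr.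
rewrite -natr1; lra.
Qed.

Lemma tele T i : eta * \sum_(1 <= s < T.+1) g s i = thtil 1 i - thtil (D.+1 + T) i.
Proof.
elim: T => [|T IH]; first by rewrite big_geq // mulr0 addn0 frz // subrr.
rewrite big_nat_recr //= mulrDr IH addnS (Hupd (D.+1 + T)); last 2 first.
- by rewrite addSn.
- by rewrite addSn ltnS leq_addr.
have -> : (D.+1 + T - D = T.+1)%N by rewrite addSn -addnS addKn.
rewrite /g; ring.
Qed.

Lemma coord_le (x : 'I_m -> R) i : `|x i| <= norm2 x.
Proof.
rewrite /norm2 -sqrtr_sqr ler_sqrt; last by apply: sumr_ge0 => j _; exact: sqr_ge0.
rewrite /sqnorm (bigD1 i) //= lerDl; apply: sumr_ge0 => j _; exact: sqr_ge0.
Qed.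

Lemma final (m0 : (0 < m)%N) T i : (1 <= T)%N ->
    `| (\sum_(1 <= t < T.+1) covind (y t) (b t i + theta t i)) / T%:R - alpha i |
      <= 2 * norm2 (thtil 1%N) / (eta * T%:R)
         + Num.sqrt (m%:R * (2 * D%:R + 1) / T%:R
                     + 2 * Rb * (m%:R * Num.sqrt m%:R) / (eta * dA alpha * T%:R))
         + D%:R * Num.sqrt m%:R / T%:R.
Proof.
move=> T1.
have T0 : 0 < T%:R :> R by rewrite ltr0n.
have etaT : 0 < eta * T%:R by rewrite mulr_gt0.
set d := dA alpha.
have d0 : 0 < d.
  apply: lt_bigmin => // j _; have /andP [a1 a2] := Hal j.
  by rewrite lt_min a1 subr_gt0 a2.
have d1 : d <= 1 by apply: bigmin_le_id.
have sm1 : 1 <= Num.sqrt (m%:R : R).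
  have h : 1 <= m%:R :> R by rewrite ler1n.
  by rewrite -[X in X <= _]sqrtr1 ler_sqrt //; lra.
set n1 := norm2 (thtil 1).
have n10 : 0 <= n1 by apply: sqrtr_ge0.
have X0 : 0 <= X.
  by rewrite /X addr_ge0 // !mulr_ge0 ?ler0n ?sqr_ge0 ?addr_ge0 ?(ltW Heta) ?(ltW HR) ?mulr_ge0 ?ler0n.
set Y := (X in Num.sqrt X).
have E1 : (\sum_(1 <= t < T.+1) covind (y t) (b t i + theta t i)) / T%:R - alpha i
    = (thtil 1 i - thtil (D.+1 + T) i) / (eta * T%:R).
  rewrite -tele.
  have -> : \sum_(1 <= s < T.+1) g s i =
      \sum_(1 <= t < T.+1) covind (y t) (b t i + theta t i) - T%:R * alpha i.
    rewrite /g sumrB sumr_const_nat subn1 /= mulr_natl //.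
  field; apply/andP; split; rewrite gt_eqF //.
have NE : sqnorm (thtil (D.+1 + T)) <= n1 ^+ 2 + T%:R * X.
  by rewrite /n1 /norm2 sqr_sqrtr ?N_bound //; apply: sumr_ge0 => j _; exact: sqr_ge0.
have TX0 : 0 <= T%:R * X by rewrite mulr_ge0 // ltW.
have sE : norm2 (thtil (D.+1 + T)) <= n1 + Num.sqrt (T%:R * X).
  rewrite /norm2 -(ger0_norm (addr_ge0 n10 (sqrtr_ge0 (T%:R * X)))) -sqrtr_sqr ler_sqrt;
    last exact: sqr_ge0.
  apply: (le_trans NE).
  rewrite sqrrD (sqr_sqrtr TX0) mulr2n; have := mulr_ge0 n10 (sqrtr_ge0 (T%:R * X)); lra.
have sY : Num.sqrt (T%:R * X) <= eta * T%:R * Num.sqrt Y.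
  rewrite -(ger0_norm (ltW etaT)) -sqrtr_sqr -sqrtrM ?sqr_ge0 // ler_sqrt; last first.
    apply: mulr_ge0; first exact: sqr_ge0.
    apply: addr_ge0; apply: divr_ge0; rewrite ?mulr_ge0 ?ler0n ?sqrtr_ge0 ?ltW //.
    by have := ler0n R D; lra.
  have -> : (eta * T%:R) ^+ 2 * Y = eta ^+ 2 * T%:R * (m%:R * (2 * D%:R + 1))
       + 2 * Rb * (m%:R * Num.sqrt m%:R) * eta * T%:R / d.
    rewrite /Y; field; rewrite !gt_eqF //.
  rewrite /X mulrDr.
  have : 2 * eta * m%:R * Rb * T%:R <= 2 * Rb * (m%:R * Num.sqrt m%:R) * eta * T%:R / d.
    rewrite ler_pdivlMr //.
    have := ler0n R m; have := ler0n R T.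
    have hh : 0 <= 2 * eta * m%:R * Rb * T%:R.
      rewrite !mulr_ge0 ?ler0n // ltW //.
    nra.
  lra.
have A : `|thtil 1 i - thtil (D.+1 + T) i| <= 2 * n1 + eta * T%:R * Num.sqrt Y.
  have := coord_le (thtil 1) i; have := coord_le (thtil (D.+1 + T)) i.
  rewrite -/n1 => c2 c1.
  apply: (le_trans (ler_normB _ _)); lra.
rewrite E1 normrM normfV (gtr0_norm etaT).
have D0 : 0 <= D%:R * Num.sqrt m%:R / T%:R :> R.
  by rewrite divr_ge0 ?mulr_ge0 ?ler0n ?sqrtr_ge0 // ltW.
suff : `|thtil 1 i - thtil (D.+1 + T) i| / (eta * T%:R) <= 2 * n1 / (eta * T%:R) + Num.sqrt Y.
  by rewrite -/n1; lra.
rewrite ler_pdivrMr // mulrDl mulfVK ?gt_eqF //; lra.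
Qed.

End Dyn.

Theorem proposition7 (R : realType) (m : nat) (alpha : 'I_m -> R)
  (b : nat -> 'I_m -> R) (y : nat -> R) (Rb : R) (D : nat) (eta : R)
  (thtil theta : nat -> 'I_m -> R) :
  (0 < m)%N ->
  (forall i j : 'I_m, (i < j)%N -> alpha i < alpha j) ->
  (forall i, 0 < alpha i < 1) ->
  0 < Rb -> 0 < eta ->
  (forall t, (1 <= t)%N -> isoK (b t)) ->
  (forall t i, (1 <= t)%N -> `|y t - b t i| <= Rb) ->
  isoK (thtil 1%N) ->
  (* theta_t = Pi_{K - b_t}(thtil_t); the forecast is q_t = b_t + theta_t *)
  (forall t, (1 <= t)%N -> is_proj (shiftK (b t)) (thtil t) (theta t)) ->
  (* delayed update of the hidden offset *)
  (forall t i, (1 <= t)%N -> (D < t)%N ->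
     thtil t.+1 i = thtil t i
       - eta * (covind (y (t - D)%N) (b (t - D)%N i + theta (t - D)%N i) - alpha i)) ->
  (forall t, (1 <= t)%N -> (t <= D)%N -> thtil t.+1 = thtil t) ->
  forall (T : nat) (i : 'I_m), (1 <= T)%N ->
    `| (\sum_(1 <= t < T.+1) covind (y t) (b t i + theta t i)) / T%:R - alpha i |
      <= 2 * norm2 (thtil 1%N) / (eta * T%:R)
         + Num.sqrt (m%:R * (2 * D%:R + 1) / T%:R
                     + 2 * Rb * (m%:R * Num.sqrt m%:R) / (eta * dA alpha * T%:R))
         + D%:R * Num.sqrt m%:R / T%:R.
Proof.
move=> m0 Hinc Hal HR Heta HbK Hy Hth1 Hproj Hupd Hfrz T i T1.
by apply: final.
Qed.
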